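(* Let $m\geq 1$ and let $f=a_0+a_1z+\cdots+a_mz^m\in\mathbb{Z}[z]$ be a primitive polynomial such that $a_m=\pm p^kd$ for some positive integers $k,d$ and a prime $p$ with $p\nmid d$, and such that every complex zero of $f$ lies outside the closed disk $\{z\in\mathbb{C}:|z|\leq d\}$. Suppose there is an index $j$ with $1\leq j\leq m$ such that $p\nmid a_{m-j}$, and suppose $|a_0/q|\leq|a_m|$, where $q$ is the smallest prime divisor of $a_0$. Then $f$ is a product of at most $\min\{k,j\}$ irreducible polynomials in $\mathbb{Z}[z]$. In particular, if $k=1$ or $j=1$, then $f$ is irreducible in $\mathbb{Z}[z]$.
   Context: A polynomial in $\mathbb{Z}[z]$ is primitive if the greatest common divisor of its coefficients is $1$. ''$f$ is a product of at most $r$ irreducible polynomials'' means that in a factorization of $f$ into irreducible elements of $\mathbb{Z}[z]$, the number of factors (counted with multiplicity) is at most $r$. *)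

(* Defs.v *)
From HB Require Import structures.
From mathcomp Require Import all_boot all_order all_algebra algC.
Set Implicit Arguments. Unset Strict Implicit. Unset Printing Implicit Defensive.
Import Order.TTheory GRing.Theory Num.Theory.
Local Open Scope ring_scope.

Definition primitive_int (f : {poly int}) : bool :=
  (\big[gcdn/0%N]_(i < size f) absz (f`_i)%R == 1)%N.

Definition irreducible_Zz (g : {poly int}) : Prop :=
  g \isn't a GRing.unit /\
  forall a b : {poly int}, g = a * b -> a \is a GRing.unit \/ b \is a GRing.unit.

Definition prod_at_most_irr (r : nat) (f : {poly int}) : Prop :=
  exists s : seq {poly int},
    [/\ (size s <= r)%N, (forall g, g \in s -> irreducible_Zz g) & f = \prod_(g <- s) g].

(* Main.v *)
From HB Require Import structures.
From Stdlib Require Import Classical.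
From mathcomp Require Import zify.
Require Import Defs.
From mathcomp Require Import all_boot all_order all_algebra algC.
Import Order.TTheory GRing.Theory Num.Theory.
Local Open Scope ring_scope.

Lemma prod_ge1 (r : seq algC) :
  (forall z, z \in r -> 1 < `|z|) -> 1 <= \prod_(z <- r) `|z|.
Proof.
elim: r => [|z r IH] H; first by rewrite big_nil.
rewrite big_cons; apply: mulr_ege1.
- by apply: ltW; apply: H; rewrite inE eqxx.
- by apply: IH => y Hy; apply: H; rewrite inE Hy orbT.
Qed.

Lemma prod_gtd (r : seq algC) (d : nat) : (0 < d)%N ->
  (forall z, z \in r -> d%:R < `|z|) -> r != [::] -> d%:R < \prod_(z <- r) `|z|.
Proof.
move=> d0; case: r => [|z r] // H _.
have d1 : (1 : algC) <= d%:R by rewrite ler1n.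
have Hz : d%:R < `|z| by apply: H; rewrite inE eqxx.
rewrite big_cons.
have P1 : 1 <= \prod_(y <- r) `|y|.
  apply: prod_ge1 => y Hy; apply: le_lt_trans d1 _; apply: H; by rewrite inE Hy orbT.
have z0 : 0 < `|z| by rewrite (le_lt_trans _ Hz) // ler0n.
refine (lt_le_trans Hz _).
by rewrite -{1}(mulr1 `|z|) ler_pM2l.
Qed.

Lemma normintr (x : int) : `|(x%:~R : algC)| = (`|x|%N)%:R.
Proof. by rewrite -intr_norm -abszE. Qed.

Lemma key (f g h : {poly int}) (d : nat) : (0 < d)%N ->
  (forall z : algC, root (map_poly intr f) z -> d%:R < `|z|) ->
  f = g * h -> (1 < size g)%N -> (d * absz (lead_coef g) < absz (g`_0)%R)%N.
Proof.
move=> d0 Hr fgh sg.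
set G := map_poly (intr : int -> algC) g.
have iz : (intr : int -> algC) 0 = 0 by [].
have szG : size G = size g by rewrite size_map_inj_poly //; exact: intr_inj.
have lcG : lead_coef G = (lead_coef g)%:~R by rewrite lead_coef_map_inj //; exact: intr_inj.
have [r Gr] := closed_field_poly_normal G.
have lc0 : lead_coef G != 0 by rewrite lead_coef_eq0 -size_poly_eq0 szG -lt0n (ltn_trans _ sg).
have szr : size r = (size g).-1.
  by rewrite -szG Gr size_scale // size_prod_XsubC.
have rootsf : forall z, z \in r -> d%:R < `|z|.
  move=> z zr; apply: Hr; rewrite fgh rmorphM rootM; apply/orP; left.
  have rG : root G z by rewrite Gr rootZ // root_prod_XsubC.
  exact: rG.
have E : `|G`_0| = `|lead_coef G| * \prod_(z <- r) `|z|.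
  rewrite -horner_coef0 {1}Gr hornerZ horner_prod normrM normr_prod; congr (_ * _).
  by apply: eq_bigr => z _; rewrite hornerXsubC sub0r normrN.
have L : (d%:R : algC) * `|lead_coef G| < `|G`_0|.
  rewrite E mulrC ltr_pM2l ?normr_gt0 //; apply: prod_gtd => //.
  by case: r szr {Gr E rootsf} => //= Hs; move: sg; case: (size g) Hs => [|[|n]].
move: L; rewrite lcG /G coef_map /= !normintr -natrM ltr_nat.
done.
Qed.

Lemma int_unit (c : int) : absz c = 1%N -> c \is a GRing.unit.
Proof. by move=> H; rewrite (intEsign c) H mulr1 unitrX // unitrN1. Qed.

Lemma prim_const (f a h : {poly int}) : primitive_int f -> f != 0 ->
  f = a * h -> (size a <= 1)%N -> a \is a GRing.unit.
Proof.
move=> pf f0 fah sa.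
have ac := size1_polyC sa.
set c := a`_0 in ac.
have cd : forall i : nat, (absz c %| absz (f`_i)%R)%N.
  by move=> i; rewrite {1}fah ac coefCM abszM dvdn_mulr.
have : (absz c %| 1)%N.
  move: pf; rewrite /primitive_int => /eqP <-.
  by apply/dvdn_biggcdP => i _; apply: cd.
rewrite dvdn1 => /eqP c1.
have c0 : c != 0 by apply/negP => /eqP c0; move: c1; rewrite c0.
rewrite poly_unitE ac size_polyC c0 coefC /=.
exact: int_unit.
Qed.

Lemma unit_absz (c : int) : c \is a GRing.unit -> absz c = 1%N.
Proof.
move=> cu; have := mulrV cu => /(congr1 absz); rewrite abszM /=.
by move/eqP; rewrite muln_eq1 => /andP [/eqP -> _].
Qed.

Lemma lc_div (f g h : {poly int}) (k d p : nat) :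
  primitive_int f -> f != 0 -> (0 < k)%N -> (0 < d)%N -> prime p -> ~~ (p %| d)%N ->
  absz (lead_coef f) = (p ^ k * d)%N ->
  (forall z : algC, root (map_poly intr f) z -> d%:R < `|z|) ->
  ((absz (f`_0)%R) %/ pdiv (absz (f`_0)%R) <= (absz (lead_coef f)))%N ->
  f = g * h -> (1 < size g)%N -> (p %| absz (lead_coef g))%N.
Proof.
move=> pf f0 k0 d0 pp pd lcf Hr Hq fgh sg.
apply/idPn => np.
have g0 : g != 0 by apply/negP => /eqP g0; move: f0; rewrite fgh g0 mul0r eqxx.
have h0 : h != 0 by apply/negP => /eqP h0; move: f0; rewrite fgh h0 mulr0 eqxx.
have AB : (absz (lead_coef g) * absz (lead_coef h) = p ^ k * d)%N.
  by rewrite -abszM -lead_coefM -fgh.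
set A := absz (lead_coef g) in AB np *.
set B := absz (lead_coef h) in AB *.
have Ad : (A %| d)%N.
  have cA : coprime A (p ^ k) by rewrite coprime_sym coprimeXl // prime_coprime.
  by rewrite -(Gauss_dvdr _ cA) -AB dvdn_mulr.
have Ale : (A <= d)%N by apply: dvdn_leq.
have A0 : (0 < A)%N by rewrite absz_gt0 lead_coef_eq0.
have B0 : (0 < B)%N by rewrite absz_gt0 lead_coef_eq0.
case: (leqP (size h) 1) => sh.
  have hu := @prim_const f h g pf f0 (etrans fgh (mulrC g h)) sh.
  have B1 : B = 1%N.
    move: hu; rewrite poly_unitE => /andP [/eqP s1 u].
    by rewrite /B lead_coefE s1 unit_absz.
  move: AB; rewrite B1 muln1 => AE.
  by move: np; rewrite AE dvdn_mulr // dvdn_exp.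
have Kg := key _ _ _ _ d0 Hr fgh sg.
have Kh := key _ _ _ _ d0 Hr (etrans fgh (mulrC g h)) sh.
rewrite -/A in Kg; rewrite -/B in Kh.
have a0E : absz (f`_0)%R = (absz (g`_0)%R * absz (h`_0)%R)%N by rewrite fgh coef0M abszM.
have g2 : (1 < absz (g`_0)%R)%N.
  apply: leq_ltn_trans Kg; by rewrite muln_gt0 d0 A0.
have hpos : (0 < absz (h`_0)%R)%N by apply: leq_ltn_trans Kh.
have qle : (pdiv (absz (f`_0)%R) <= absz (g`_0)%R)%N.
  by apply: pdiv_min_dvd => //; rewrite a0E dvdn_mulr.
have q0 : (0 < pdiv (absz (f`_0)%R))%N by rewrite pdiv_gt0.
have := leq_div2l (absz (f`_0)%R) q0 qle.
have E : (absz (f`_0)%R %/ absz (g`_0)%R = absz (h`_0)%R)%N.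
  by rewrite a0E mulKn //; apply: ltnW.
rewrite E.
move=> H1; have H2 := leq_trans H1 Hq.
rewrite lcf -AB in H2.
have : (d * B < A * B)%N := leq_trans Kh H2.
by rewrite ltn_pmul2r // ltnNge Ale.
Qed.

Lemma factor_exists (f : {poly int}) : primitive_int f -> f != 0 ->
  forall n (g h : {poly int}), (size g <= n)%N -> f = g * h -> (1 < size g)%N ->
  exists s : seq {poly int},
    [/\ forall e, e \in s -> irreducible_Zz e,
        forall e, e \in s -> exists h', f = e * h' & g = \prod_(e <- s) e].
Proof.
move=> pf f0; elim=> [|n IH] g h sn fgh sg.
  by move: (leq_trans sg sn).
have gnu : g \isn't a GRing.unit.
  by rewrite poly_unitE negb_and; apply/orP; left; rewrite neq_ltn sg orbT.
case: (classic (irreducible_Zz g)) => Hg.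
  exists [:: g]; split.
  - by move=> e; rewrite inE => /eqP ->.
  - by move=> e; rewrite inE => /eqP ->; exists h.
  - by rewrite big_seq1.
have [a [b [gab [na nb]]]] : exists a b, g = a * b /\
    a \isn't a GRing.unit /\ b \isn't a GRing.unit.
  apply: NNPP => Hn; apply: Hg; split => // a b gab.
  case: (boolP (a \is a GRing.unit)) => ua; first by left.
  case: (boolP (b \is a GRing.unit)) => ub; first by right.
  by exfalso; apply: Hn; exists a, b.
have sa : (1 < size a)%N.
  rewrite ltnNge; apply/negP => sa; move/negP: na; apply.
  by apply: (@prim_const f a (b * h)) => //; rewrite fgh gab mulrA.
have sb : (1 < size b)%N.
  rewrite ltnNge; apply/negP => sb; move/negP: nb; apply.
  by apply: (@prim_const f b (a * h)) => //; rewrite fgh gab (mulrC a b) mulrA.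
have a0 : a != 0 by rewrite -size_poly_gt0 (ltn_trans _ sa).
have b0 : b != 0 by rewrite -size_poly_gt0 (ltn_trans _ sb).
have szg : size g = (size a + size b).-1 by rewrite gab size_mul.
have [sA [iA dA pA]] := IH a (b * h) ltac:(lia) ltac:(by rewrite fgh gab mulrA) sa.
have [sB [iB dB pB]] := IH b (a * h) ltac:(lia) ltac:(by rewrite fgh gab (mulrC a b) mulrA) sb.
exists (sA ++ sB); split.
- by move=> e; rewrite mem_cat => /orP [] ?; [apply: iA | apply: iB].
- by move=> e; rewrite mem_cat => /orP [] ?; [apply: dA | apply: dB].
- by rewrite big_cat /= -pA -pB.
Qed.

Lemma count_k (s : seq {poly int}) (p : nat) :
  (forall e, e \in s -> (p %| absz (lead_coef e))%N) ->
  (p ^ size s %| absz (lead_coef (\prod_(e <- s) e)%R))%N.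
Proof.
elim: s => [|e s IH] H; first by rewrite big_nil lead_coef1 expn0 dvd1n.
rewrite big_cons lead_coefM abszM /= expnS dvdn_mul //.
  by apply: H; rewrite inE eqxx.
by apply: IH => x Hx; apply: H; rewrite inE Hx orbT.
Qed.

Lemma Fp0 (p : nat) (x : int) : prime p ->
  ((x%:~R : 'F_p) == 0) = (p %| absz x)%N.
Proof.
move=> pp; rewrite {1}(intEsign x) intrM mulf_eq0 rmorphXn rmorphN1 signr_eq0 /=.
by rewrite (dvdn_pcharf (pchar_Fp pp)).
Qed.

Lemma size_Fp (p : nat) (e : {poly int}) : prime p -> (1 < size e)%N ->
  (p %| absz (lead_coef e))%N ->
  (size (map_poly (intr : int -> 'F_p) e) <= (size e).-1)%N.
Proof.
move=> pp se pe.
set q := map_poly _ e.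
have sq : (size q <= size e)%N by rewrite /q /map_poly; apply: size_poly.
case: (ltngtP (size q) (size e)) sq => // Hq _; first by case: (size e) Hq.
have : lead_coef q == 0.
  by rewrite lead_coefE Hq /q coef_map_id0 // -lead_coefE Fp0.
rewrite lead_coef_eq0 -size_poly_eq0 Hq => /eqP H; by rewrite H in se.
Qed.

Lemma count_j (p : nat) (s : seq {poly int}) : prime p ->
  (forall e, e \in s -> (p %| absz (lead_coef e))%N /\ (1 < size e)%N) ->
  \prod_(e <- s) e != 0 /\
  (size (map_poly (intr : int -> 'F_p) (\prod_(e <- s) e)%R) + size s
     <= size (\prod_(e <- s) e)%R)%N.
Proof.
move=> pp; elim: s => [|e s IH] H.
  by rewrite big_nil oner_eq0 rmorph1 !size_poly1.
have [He1 He2] := H e (mem_head e s).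
have [P0 IHs] := IH (fun x Hx => H x ltac:(by rewrite inE Hx orbT)).
have e0 : e != 0 by rewrite -size_poly_gt0 (ltn_trans _ He2).
rewrite big_cons mulf_neq0 //; split => //.
have := size_Fp _ _ pp He2 He1.
rewrite (size_mul e0 P0).
have hM : (size (map_poly (intr : int -> 'F_p) (e * \prod_(e0 <- s) e0)%R) <=
   (size (map_poly (intr : int -> 'F_p) e) + size (map_poly (intr : int -> 'F_p) (\prod_(e0 <- s) e0)%R)).-1)%N.
  by rewrite rmorphM; apply: size_polyMleq.
have : (0 < size (\prod_(e0 <- s) e0)%R)%N by rewrite size_poly_gt0.
move: IHs He2 hM; rewrite [size (_ :: _)]/=.
move: (size (map_poly _ (e * _))) => Y.
move: (size (map_poly _ e)) => a.
move: (size (map_poly _ (\prod_(j <- s) j))) => X.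
move: (size (\prod_(j <- s) j)%R) (size e) (size s) => S E n. lia.
Qed.

Theorem theorem3 (f : {poly int}) (m k d p j : nat) :
  (1 <= m)%N -> size f = m.+1 ->
  primitive_int f ->
  (0 < k)%N -> (0 < d)%N -> prime p -> ~~ (p %| d)%N ->
  (lead_coef f = (p ^ k * d)%N%:Z \/ lead_coef f = - (p ^ k * d)%N%:Z) ->
  (forall z : algC, root (map_poly intr f) z -> d%:R < `|z|) ->
  (1 <= j <= m)%N -> ~~ (p %| (absz (f`_(m - j))%R))%N ->
  ((absz (f`_0)%R) %/ pdiv (absz (f`_0)%R) <= (absz (lead_coef f)))%N ->
  prod_at_most_irr (minn k j) f /\
  ((k = 1%N \/ j = 1%N) -> irreducible_Zz f).
Proof.
move=> m1 sf pf k0 d0 pp pd lcfE Hr /andP [j1 jm] pj Hq.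
have f0 : f != 0 by rewrite -size_poly_gt0 sf.
have lcf : absz (lead_coef f) = (p ^ k * d)%N.
  by case: lcfE => ->; rewrite ?abszN.
have sf1 : (1 < size f)%N by rewrite sf ltnS.
have [s [iS dS pS]] := @factor_exists f pf f0 (size f) f 1 (leqnn (size f)) (esym (mulr1 f)) sf1.
have sizeS : forall e, e \in s -> (1 < size e)%N.
  move=> e es; have [h' feh] := dS e es.
  rewrite ltnNge; apply/negP => se.
  have [nu _] := iS e es.
  by move/negP: nu; apply; apply: (@prim_const f e h').
have pS' : forall e, e \in s -> (p %| absz (lead_coef e))%N.
  move=> e es; have [h' feh] := dS e es.
  exact: (@lc_div f e h' k d p pf f0 k0 d0 pp pd lcf Hr Hq feh (sizeS e es)).
have sk : (size s <= k)%N.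
  have := @count_k s p pS'; rewrite -pS lcf mulnC Gauss_dvdr.
    by rewrite dvdn_Pexp2l // prime_gt1.
  by rewrite coprimeXl // prime_coprime.
have sj : (size s <= j)%N.
  have [_ C] := @count_j p s pp (fun e es => conj (pS' e es) (sizeS e es)).
  rewrite -pS sf in C.
  have L : (m - j < size (map_poly (intr : int -> 'F_p) f))%N.
    rewrite ltnNge; apply/negP => H.
    have := nth_default 0 H; rewrite coef_map_id0 // => /eqP.
    by rewrite Fp0 // (negbTE pj).
  move: C L; move: (size (map_poly _ f)) => X C L.
  clear -C L jm; lia.
have ss : (size s <= minn k j)%N by rewrite leq_min sk sj.
split; first by exists s; split.
move=> Hkj.
have s1 : (size s <= 1)%N by case: Hkj => E; [rewrite -E | rewrite -E].
case: s iS pS s1 {dS sizeS pS' sk sj ss} => [|g [|g' s']] iS pS s1 //.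
  by move: sf; rewrite pS big_nil size_poly1 => [[]] E; rewrite -E in m1.
by rewrite pS big_seq1; apply: iS; rewrite inE eqxx.
Qed.
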